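(* Let $L^x,L^y>0$, let $i\neq j$ be two boxes, each box $k\in\{i,j\}$ having center $(c^x_k,c^y_k)$, side lengths $(\ell^x_k,\ell^y_k)$ and constants $lb^s_k>0$, $ub^s_k$. Let $$Q^{ub}=\{(c_i,c_j,\ell_i,\ell_j)\in\mathbb{R}^8:\ \tfrac12\ell^s_k\le c^s_k\le L^s-\tfrac12\ell^s_k,\ lb^s_k\le\ell^s_k\le ub^s_k\ \ \forall s\in\{x,y\},k\in\{i,j\}\}.$$ Let $E^8$ be the set of $(c,\ell,z)$ with $(c,\ell)=(c_i,c_j,\ell_i,\ell_j)\in Q^{ub}$, $z=(z^s_{p,q})_{s\in\{x,y\},(p,q)\in\{(i,j),(j,i)\}}\in\{0,1\}^4$ not identically zero, $z^s_{i,j}+z^s_{j,i}\le1$ for each $s$, $z^s_{p,q}=1\Rightarrow\mathscr{B}_p\leftarrow_s\mathscr{B}_q$, and $z^s_{i,j}=z^s_{j,i}=0\Rightarrow(\mathscr{B}_i\not\leftarrow_s\mathscr{B}_j$ and $\mathscr{B}_j\not\leftarrow_s\mathscr{B}_i)$. Let $E^U$ be the set of $(c,\ell,u)$ with $(c,\ell)\in Q^{ub}$, $u=(u^s_{p,q})\in\{0,1\}^4$ having exactly one entry equal to $1$, and $u^s_{p,q}=1\Rightarrow\mathscr{B}_p\leftarrow_s\mathscr{B}_q$. Then for any $\{r,s\}=\{x,y\}$ and $\{p,q\}=\{i,j\}$: (a) $c^s_p+ub^s_q(1-z^s_{q,p})\ge\tfrac12\ell^s_p+\ell^s_q$ holds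 for all points of $E^8$; (b) if $L^s<ub^s_p+ub^s_q$, then $z^r_{p,q}+z^r_{q,p}\ge\dfrac{\ell^s_p+\ell^s_q-L^s}{ub^s_p+ub^s_q-L^s}$ holds for all points of $E^8$, and $u^r_{p,q}+u^r_{q,p}\ge\dfrac{\ell^s_p+\ell^s_q-L^s}{ub^s_p+ub^s_q-L^s}$ holds for all points of $E^U$.
   Context: $\mathscr{B}_p\leftarrow_s\mathscr{B}_q$ means $c^s_p+\tfrac12\ell^s_p\le c^s_q-\tfrac12\ell^s_q$, and $\mathscr{B}_p\not\leftarrow_s\mathscr{B}_q$ means $c^s_p+\tfrac12\ell^s_p\ge c^s_q-\tfrac12\ell^s_q$. $E^8=\operatorname{Em}(Q^{ub},D^8,C^8)$ and $E^U=\operatorname{Em}(Q^{ub},D^4,U^4)$ in the paper's notation. In the paper $ub^s_k=\min\{\sqrt{\alpha_k\beta_k},L^s\}$, $lb^s_k=\beta_k/ub^s_k$. *)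

(* Defs.v *)
From Stdlib Require Import Reals Lra.
Open Scope R_scope.

Inductive axis : Type := AX | AY.
Inductive box : Type := Bi | Bj.

(* Configuration data: centers c s k, side lengths l s k.
   Binary vectors z^s_{p,q} (resp. u^s_{p,q}) are functions
   axis -> box -> box -> R; only the entries with p <> q are meaningful. *)

Definition prec (c l : axis -> box -> R) (s : axis) (p q : box) : Prop :=
  c s p + l s p / 2 <= c s q - l s q / 2.

Definition nprec (c l : axis -> box -> R) (s : axis) (p q : box) : Prop :=
  c s p + l s p / 2 >= c s q - l s q / 2.

Definition is01 (x : R) : Prop := x = 0 \/ x = 1.

Definition Qub (L : axis -> R) (lb ub : axis -> box -> R)
  (c l : axis -> box -> R) : Prop :=
  forall s k,
    l s k / 2 <= c s k /\ c s k <= L s - l s k / 2 /\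
    lb s k <= l s k /\ l s k <= ub s k.

Definition E8 (L : axis -> R) (lb ub : axis -> box -> R)
  (c l : axis -> box -> R) (z : axis -> box -> box -> R) : Prop :=
  Qub L lb ub c l /\
  (forall s p q, p <> q -> is01 (z s p q)) /\
  (exists s p q, p <> q /\ z s p q <> 0) /\
  (forall s, z s Bi Bj + z s Bj Bi <= 1) /\
  (forall s p q, p <> q -> z s p q = 1 -> prec c l s p q) /\
  (forall s, z s Bi Bj = 0 -> z s Bj Bi = 0 ->
     nprec c l s Bi Bj /\ nprec c l s Bj Bi).

Definition EU (L : axis -> R) (lb ub : axis -> box -> R)
  (c l : axis -> box -> R) (u : axis -> box -> box -> R) : Prop :=
  Qub L lb ub c l /\
  (forall s p q, p <> q -> is01 (u s p q)) /\
  (exists s0 p0 q0, p0 <> q0 /\ u s0 p0 q0 = 1 /\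
     forall s p q, p <> q -> (s, p, q) <> (s0, p0, q0) -> u s p q = 0) /\
  (forall s p q, p <> q -> u s p q = 1 -> prec c l s p q).

(* Main.v *)
Require Import Defs.
From Stdlib Require Import Reals Lra.
Open Scope R_scope.

Lemma other_axis (r s s' : axis) : r <> s -> s' <> r -> s' = s.
Proof. destruct r, s, s'; congruence. Qed.

Lemma pair_cases (p q p' q' : box) : p <> q -> p' <> q' ->
  (p' = p /\ q' = q) \/ (p' = q /\ q' = p).
Proof. destruct p, q, p', q'; intuition congruence. Qed.

Lemma div_le1 (N D : R) : 0 < D -> N <= D -> N / D <= 1.
Proof. intros HD H. apply Rmult_le_reg_r with D; auto.
  unfold Rdiv. rewrite Rmult_assoc, Rinv_l; lra. Qed.

Lemma div_le0 (N D : R) : 0 < D -> N <= 0 -> N / D <= 0.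
Proof. intros HD H. unfold Rdiv.
  assert (0 < / D) by (apply Rinv_0_lt_compat; auto). nra. Qed.

Theorem proposition6p3 (L : axis -> R) (lb ub : axis -> box -> R) :
  (forall s, 0 < L s) ->
  (forall s k, 0 < lb s k) ->
  forall (r s : axis) (p q : box), r <> s -> p <> q ->
  (forall c l z, E8 L lb ub c l z ->
     c s p + ub s q * (1 - z s q p) >= l s p / 2 + l s q) /\
  (L s < ub s p + ub s q ->
     (forall c l z, E8 L lb ub c l z ->
        z r p q + z r q p >= (l s p + l s q - L s) / (ub s p + ub s q - L s)) /\
     (forall c l u, EU L lb ub c l u ->
        u r p q + u r q p >= (l s p + l s q - L s) / (ub s p + ub s q - L s))).
Proof.
  intros HL Hlb r s p q Hrs Hpq.
  assert (Hqp : q <> p) by congruence.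
  split.
  { intros c l z (HQ & H01 & _ & _ & Hprec & _).
    destruct (HQ s p) as (A1 & A2 & A3 & A4).
    destruct (HQ s q) as (B1 & B2 & B3 & B4).
    destruct (H01 s q p Hqp) as [E|E]; rewrite E.
    - lra.
    - specialize (Hprec s q p Hqp E). unfold prec in Hprec. lra. }
  intros HLs.
  assert (Hsep : forall c l, Qub L lb ub c l ->
     (prec c l s p q \/ prec c l s q p) -> l s p + l s q - L s <= 0).
  { intros c l HQ [P|P]; unfold prec in P;
    destruct (HQ s p) as (A1 & A2 & A3 & A4);
    destruct (HQ s q) as (B1 & B2 & B3 & B4); lra. }
  assert (Hle1 : forall c l, Qub L lb ub c l ->
     (l s p + l s q - L s) / (ub s p + ub s q - L s) <= 1).
  { intros c l HQ. apply div_le1; [lra|].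
    destruct (HQ s p) as (A1 & A2 & A3 & A4);
    destruct (HQ s q) as (B1 & B2 & B3 & B4); lra. }
  split.
  - intros c l z (HQ & H01 & [s' [p' [q' [Hpq' Hnz]]]] & Hsum & Hprec & _).
    specialize (Hle1 c l HQ).
    destruct (H01 r p q Hpq) as [E1|E1]; destruct (H01 r q p Hqp) as [E2|E2].
    + assert (Hs' : s' <> r).
      { intro; subst s'. destruct (pair_cases p q p' q' Hpq Hpq') as [[-> ->]|[-> ->]]; auto. }
      pose proof (other_axis r s s' Hrs Hs') as ->.
      destruct (H01 s p' q' Hpq') as [E|E]; [contradiction|].
      pose proof (Hprec s p' q' Hpq' E) as P.
      assert (l s p + l s q - L s <= 0).
      { apply (Hsep c l HQ).
        destruct (pair_cases p q p' q' Hpq Hpq') as [[-> ->]|[-> ->]]; auto. }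
      rewrite E1, E2. assert (Hd := div_le0 (l s p + l s q - L s) (ub s p + ub s q - L s) ltac:(lra) H). lra.
    + rewrite E1, E2. lra.
    + rewrite E1, E2. lra.
    + exfalso. pose proof (Hsum r).
      destruct p, q; try congruence; lra.
  - intros c l u (HQ & H01 & [s0 [p0 [q0 [Hpq0 [E0 Huniq]]]]] & Hprec).
    specialize (Hle1 c l HQ).
    destruct (H01 r p q Hpq) as [E1|E1]; destruct (H01 r q p Hqp) as [E2|E2].
    + assert (Hs' : s0 <> r).
      { intro; subst s0. destruct (pair_cases p q p0 q0 Hpq Hpq0) as [[-> ->]|[-> ->]]; lra. }
      pose proof (other_axis r s s0 Hrs Hs') as ->.
      pose proof (Hprec s p0 q0 Hpq0 E0) as P.
      assert (l s p + l s q - L s <= 0).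
      { apply (Hsep c l HQ).
        destruct (pair_cases p q p0 q0 Hpq Hpq0) as [[-> ->]|[-> ->]]; auto. }
      rewrite E1, E2. assert (Hd := div_le0 (l s p + l s q - L s) (ub s p + ub s q - L s) ltac:(lra) H). lra.
    + rewrite E1, E2. lra.
    + rewrite E1, E2. lra.
    + exfalso.
      assert (D : (r, q, p) <> (s0, p0, q0) \/ (r, p, q) <> (s0, p0, q0)).
      { clear -Hpq. destruct r, s0, p, q, p0, q0; try congruence;
        first [left; congruence | right; congruence]. }
      destruct D as [D|D].
      * rewrite (Huniq r q p Hqp D) in E2. lra.
      * rewrite (Huniq r p q Hpq D) in E1. lra.
Qed.
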